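(* Fix $\epsilon\in(0,1)$. Let $G=(V,E)$ be an unweighted simple graph on $n$ vertices with minimum degree $d$ and minimum cut value $c$. Let $\mathcal{C}$ be the set of all non-singleton cuts of $G$ with cut value at most $c+\epsilon d$. Then the number of edges participating in some cut of $\mathcal{C}$, i.e. $\left|\bigcup_{C\in\mathcal{C}} C\right|$, is $O(n)$, where the implied constant depends only on $\epsilon$.
   Context: A cut is identified with the set of edges between $S$ and $V\setminus S$ for some $\emptyset\neq S\subsetneq V$; its value is the number of such edges. A cut is non-singleton if both $S$ and $V\setminus S$ contain at least two vertices. The minimum cut value is the minimum value over all cuts. *)

(* Defs.v *)
From HB Require Import structures.
From mathcomp Require Import all_boot all_order all_algebra.
From mathcomp Require Export reals.
Set Implicit Arguments. Unset Strict Implicit. Unset Printing Implicit Defensive.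

Definition simple_graph (T : finType) (e : rel T) : Prop :=
  symmetric e /\ irreflexive e.

Definition edges (T : finType) (e : rel T) : {set {set T}} :=
  [set [set x; y] | x in T, y in T & e x y].

Definition cut (T : finType) (e : rel T) (S : {set T}) : {set {set T}} :=
  [set f in edges e | #|f :&: S| == 1%N].

Definition is_cut_side (T : finType) (S : {set T}) : bool :=
  (S != set0) && (S != [set: T]).

Definition nonsingleton (T : finType) (S : {set T}) : bool :=
  (1 < #|S|)%N && (1 < #|~: S|)%N.

Definition degree (T : finType) (e : rel T) (x : T) : nat := #|[set y | e x y]|.

Definition is_min_degree (T : finType) (e : rel T) (d : nat) : Prop :=
  (exists x, degree e x = d) /\ (forall x, (d <= degree e x)%N).

Definition is_min_cut_value (T : finType) (e : rel T) (c : nat) : Prop :=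
  (exists S : {set T}, is_cut_side S /\ #|cut e S| = c) /\
  (forall S : {set T}, is_cut_side S -> (c <= #|cut e S|)%N).

(* Main.v *)
Require Import Defs.
From HB Require Import structures.
From mathcomp Require Import all_boot all_order all_algebra.
From mathcomp Require Import reals.
From mathcomp Require Import zify.
From mathcomp Require Import ring lra.
Import Order.TTheory GRing.Theory Num.Theory.

Set Implicit Arguments. Unset Strict Implicit. Unset Printing Implicit Defensive.

Lemma card_bigcup_le (I U : finType) (X : {set I}) (B : I -> {set U}) :
  #|\bigcup_(x in X) B x| <= \sum_(x in X) #|B x|.
Proof.
elim/big_rec2: _ => [|i A n _ IH]; first by rewrite cards0.
apply: leq_trans (leq_card_setU _ _) _; exact: leq_add.
Qed.

Lemma card_sep_sum (U : finType) (A : {set U}) (p : pred U) :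
  #|[set f in A | p f]| = \sum_(f in A) p f.
Proof.
rewrite -sum1_card [LHS]big_mkcond [RHS]big_mkcond /=.
apply: eq_bigr => f _; rewrite !inE; by case: (f \in A); case: (p f).
Qed.

Section G.
Variables (T : finType) (e : rel T).
Hypothesis esym : symmetric e.
Hypothesis eirr : irreflexive e.

Lemma edge_neq a b : e a b -> a != b.
Proof. by move=> h; apply/eqP => E; move: h; rewrite E eirr. Qed.

Lemma card2I (a b : T) (S : {set T}) : a != b ->
  #|[set a; b] :&: S| = (a \in S) + (b \in S).
Proof.
move=> nab.
have setE (X : {set T}) : (forall z, (z \in [set a; b] :&: S) = (z \in X)) -> [set a; b] :&: S = X.
  by move=> H; apply/setP => z; rewrite H.
have nba : b != a by rewrite eq_sym.
case aS: (a \in S); case bS: (b \in S).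
- rewrite (@setE [set a; b]) ?cards2 ?nab //; last move=> z; rewrite !inE.
  by case: (z =P a) => [->|/eqP za]; [rewrite ?eqxx ?aS ?(negbTE nab) ?(negbTE nba) /= ?andbT ?andbF | case: (z =P b) => [->|/eqP zb]; rewrite ?(negbTE za) ?(negbTE nba) ?(negbTE zb) ?eqxx ?bS /= ?andbT ?andbF].
- rewrite (@setE [set a]) ?cards1 //; last move=> z; rewrite !inE.
  by case: (z =P a) => [->|/eqP za]; [rewrite ?eqxx ?aS ?(negbTE nab) ?(negbTE nba) /= ?andbT ?andbF | case: (z =P b) => [->|/eqP zb]; rewrite ?(negbTE za) ?(negbTE nba) ?(negbTE zb) ?eqxx ?bS /= ?andbT ?andbF].
- rewrite (@setE [set b]) ?cards1 //; last move=> z; rewrite !inE.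
  by case: (z =P a) => [->|/eqP za]; [rewrite ?eqxx ?aS ?(negbTE nab) ?(negbTE nba) /= ?andbT ?andbF | case: (z =P b) => [->|/eqP zb]; rewrite ?(negbTE za) ?(negbTE nba) ?(negbTE zb) ?eqxx ?bS /= ?andbT ?andbF].
- rewrite (@setE set0) ?cards0 //; last move=> z; rewrite !inE.
  by case: (z =P a) => [->|/eqP za]; [rewrite ?eqxx ?aS ?(negbTE nab) ?(negbTE nba) /= ?andbT ?andbF | case: (z =P b) => [->|/eqP zb]; rewrite ?(negbTE za) ?(negbTE nba) ?(negbTE zb) ?eqxx ?bS /= ?andbT ?andbF].
Qed.

Lemma edgesP (f : {set T}) : reflect (exists a b, e a b /\ f = [set a; b]) (f \in edges e).
Proof.
apply: (iffP imset2P) => [[a b _] | [a [b [hab ->]]]].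
  by rewrite inE => hab ->; exists a, b.
by exists a b => //; rewrite inE.
Qed.

Lemma edge_mem a b : e a b -> [set a; b] \in edges e.
Proof. by move=> h; apply/edgesP; exists a, b. Qed.

Lemma cut_pair a b (S : {set T}) : e a b -> ([set a; b] \in cut e S) = ((a \in S) != (b \in S)).
Proof.
move=> h; rewrite /cut inE edge_mem //= card2I ?edge_neq //.
by case: (a \in S); case: (b \in S).
Qed.

Lemma cutP (f S : {set T}) : reflect (exists a b, [/\ e a b, f = [set a; b], a \in S & b \notin S])
  (f \in cut e S).
Proof.
apply: (iffP idP) => [hf | [a [b [hab -> aS bS]]]]; last by rewrite cut_pair // aS bS.
have : f \in edges e by move: hf; rewrite inE => /andP[].
case/edgesP => a [b [hab Ef]].
move: hf; rewrite Ef cut_pair //.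
case aS: (a \in S); case bS: (b \in S) => //= _.
  by exists a, b; rewrite aS bS.
by exists b, a; rewrite esym aS bS setUC.
Qed.

Lemma cut_sub_edges (S : {set T}) : cut e S \subset edges e.
Proof. by apply/subsetP => f; rewrite inE => /andP[]. Qed.

Lemma cutC (S : {set T}) : cut e (~: S) = cut e S.
Proof.
apply/setP => f; apply/cutP/cutP => [[a [b [h -> aS bS]]]|[a [b [h -> aS bS]]]].
  by exists b, a; move: aS bS; rewrite esym setUC !inE negbK => aS bS; split.
by exists b, a; rewrite esym setUC !inE aS bS.
Qed.


Lemma cut_at (S : {set T}) x :
  #|[set f in cut e S | x \in f]| = #|[set y | e x y && ((x \in S) != (y \in S))]|.
Proof.
have -> : [set f in cut e S | x \in f] =
    [set [set x; y] | y in [set y | e x y && ((x \in S) != (y \in S))]].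
  apply/setP => f; rewrite inE; apply/andP/imsetP.
    case=> /cutP [a [b [hab -> aS bS]]].
    rewrite in_set2 => /orP[/eqP->|/eqP->].
      by exists b => //; rewrite inE hab aS bS.
    by exists a; [rewrite inE esym hab aS (negbTE bS) | rewrite setUC].
  case=> y; rewrite inE => /andP[hxy hS] ->.
  by rewrite cut_pair // set21.
rewrite card_in_imset // => y1 y2; rewrite !inE => /andP[h1 _] /andP[h2 _] E.
have : y1 \in [set x; y2] by rewrite -E set22.
rewrite in_set2 => /orP[/eqP E1|/eqP //].
by move: h1; rewrite E1 eirr.
Qed.

Lemma in_cut_edge (S : {set T}) f : f \in cut e S -> f \in edges e.
Proof. by move/(subsetP (cut_sub_edges S)). Qed.

Lemma cut1 x : #|cut e [set x]| = degree e x.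
Proof.
have -> : cut e [set x] = [set f in cut e [set x] | x \in f].
  apply/setP => f; rewrite inE; case hf: (f \in cut e [set x]) => //=.
  by case/cutP: hf => a [b [_ -> aS _]]; move: aS; rewrite inE => /eqP->; rewrite set21.
rewrite cut_at /degree; apply: eq_card => y; rewrite !inE eqxx /=.
case h: (e x y) => //=; case: eqP => // E.
have E' : y = x by apply/eqP; rewrite -E.
by move: h; rewrite E' eirr.
Qed.

Lemma edge_in_cut1 x f : f \in edges e -> x \in f -> f \in cut e [set x].
Proof.
case/edgesP => a [b [hab ->]]; rewrite in_set2 cut_pair // !inE.
have nab := @edge_neq a b hab.
case/orP => /eqP ->; rewrite eqxx.
  by rewrite [b == a]eq_sym (negbTE nab).
by rewrite (negbTE nab).
Qed.

Lemma card_cut_split (S : {set T}) x :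
  #|cut e S| = #|[set f in cut e S | x \in f]| + #|[set f in cut e S | x \notin f]|.
Proof.
rewrite -(cardsID [set f : {set T} | x \in f] (cut e S)); congr (_ + _);
  by apply: eq_card => f; rewrite !inE // andbC.
Qed.

Lemma deg_split x (S : {set T}) :
  degree e x = #|[set y | e x y && (y \in S)]| + #|[set y | e x y && (y \notin S)]|.
Proof.
rewrite /degree -(cardsID S [set y | e x y]); congr (_ + _);
  by apply: eq_card => f; rewrite !inE // andbC.
Qed.

Lemma cut_remove (A : {set T}) x : x \in A ->
  #|cut e (A :\ x)| + #|[set y | e x y && (y \notin A)]| =
  #|cut e A| + #|[set y | e x y && (y \in A)]|.
Proof.
move=> xA.
rewrite (card_cut_split A x) (card_cut_split (A :\ x) x) !cut_at.
have -> : [set f in cut e A | x \notin f] = [set f in cut e (A :\ x) | x \notin f].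
  apply/setP => f; rewrite /cut !inE; case xf: (x \in f) => /=; rewrite ?andbF //.
  rewrite !andbT; congr (_ && (_ == 1)); apply: eq_card => z; rewrite !inE.
  by case: (z =P x) => [->|]; rewrite ?xf //= andbT.
have -> : #|[set y | e x y && ((x \in A :\ x) != (y \in A :\ x))]| = #|[set y | e x y && (y \in A)]|.
  apply: eq_card => y; rewrite !inE eqxx /=.
  case h: (e x y) => //=; case: (y =P x) => [E|_] /=; [by move: h; rewrite E eirr | by case: (y \in A)].
have -> : #|[set y | e x y && ((x \in A) != (y \in A))]| = #|[set y | e x y && (y \notin A)]|.
  by apply: eq_card => y; rewrite !inE xA.
lia.
Qed.

End G.


Section Main.
Variables (T : finType) (e : rel T) (c d k : nat).
Hypothesis esym : symmetric e.
Hypothesis eirr : irreflexive e.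
Hypothesis hdeg : forall x, d <= degree e x.
Hypothesis hcut : forall S : {set T}, is_cut_side S -> c <= #|cut e S|.
Hypothesis hcd : c <= d.
Hypothesis hk : 2 <= k.

Definition Fp (S : {set T}) := nonsingleton S && (k * #|cut e S| + 4 * d <= k * (c + d)).
Definition Up := \bigcup_(S | Fp S) cut e S.
Definition UP (P : {set T}) := [set f in Up | f \subset P].
Definition mm := maxn 1 (d %/ k).

Lemma Fp_cut S : Fp S -> #|cut e S| <= 2 * d.
Proof. case/andP => _ h; nia. Qed.

Lemma FpC S : Fp (~: S) = Fp S.
Proof. rewrite /Fp /nonsingleton (cutC esym eirr) (setCK S); congr (_ && _); exact: andbC. Qed.

Lemma mm_ge1 : 1 <= mm.
Proof. exact: leq_maxl. Qed.

Lemma mm_le : k * (mm - 1) <= d.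
Proof.
rewrite /mm; case: (leqP 1 (d %/ k)) => h.
  have := leq_trunc_div d k; nia.
by rewrite subnn muln0.
Qed.

Lemma mm_ge : d <= 2 * k * mm.
Proof.
rewrite /mm; have := ltn_ceil d (ltn_trans (isT : 0 < 1) hk).
case: (leqP 1 (d %/ k)) => h.
  nia.
nia.
Qed.

Lemma peel_deg (P A : {set T}) x : Fp A -> x \in A -> #|P :&: A| < mm ->
  degree e x <= k * #|[set y | e x y && (y \notin P)]|.
Proof.
case/andP => /andP[hA hAc] hW xA hPA.
have cs : is_cut_side (A :\ x).
  apply/andP; split.
    apply/eqP => E; have := cardsD1 x A; rewrite xA E cards0; lia.
  apply/eqP => E; have : x \in A :\ x by rewrite E inE.
  by rewrite !inE eqxx.
have hc := hcut cs.
have hr := cut_remove esym eirr xA.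
have hd := deg_split e x A.
have hdx := hdeg x.
have hI : #|[set y | e x y && (y \in A)]| <= #|[set y | e x y && (y \notin P)]| + (mm - 1).
  apply: leq_trans (_ : _ <= #|[set y | e x y && (y \notin P)] :|: (P :&: A)|) _.
    apply: subset_leq_card; apply/subsetP => y; rewrite !inE.
    by case: (e x y) => //=; case: (y \in P).
  apply: leq_trans (leq_card_setU _ _) _; lia.
have hml := mm_le.
set W' := #|cut e (A :\ x)| in hc hr.
set W := #|cut e A| in hW hr.
set O := #|[set y | e x y && (y \notin A)]| in hr hd.
set I := #|[set y | e x y && (y \in A)]| in hr hd hI.
set L := #|[set y | e x y && (y \notin P)]| in hI *.
set D := degree e x in hd hdx *.
set M := mm - 1 in hI hml.
have h1 : k * W' + k * O = k * W + k * I by rewrite -!mulnDr hr.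
have h2 : k * c <= k * W' by rewrite leq_mul2l hc orbT.
have h3 : k * D = k * I + k * O by rewrite hd mulnDr.
have h4 : k * I <= k * L + k * M by rewrite -mulnDr leq_mul2l hI orbT.
have h5 : 2 * D + k * d <= k * D + 2 * d by nia.
nia.
Qed.

Lemma sum_ell (P X : {set T}) : X \subset P ->
  \sum_(x in X) #|[set y | e x y && (y \notin P)]| <= #|cut e P|.
Proof.
move=> XP.
rewrite (eq_bigr (fun x => \sum_(f in cut e P) (x \in f))); last first.
  move=> x xX; rewrite -card_sep_sum (cut_at esym eirr).
  by apply: eq_card => y; rewrite !inE (subsetP XP x xX).
rewrite exchange_big /= -sum1_card; apply: leq_sum => f fP.
rewrite -card_sep_sum.
have : #|f :&: P| == 1 by move: fP; rewrite inE => /andP[].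
move/eqP <-; apply: subset_leq_card; apply/subsetP => x; rewrite !inE => /andP[xX ->].
by rewrite (subsetP XP x xX).
Qed.

Lemma final_case (P : {set T}) :
  ~~ [exists A, Fp A && (mm <= #|P :&: A|) && (mm <= #|P :\: A|)] ->
  #|UP P| <= k * #|cut e P|.
Proof.
move=> hfin.
pose X := [set x in P | [exists A, Fp A && (x \in A) && (#|P :&: A| < mm)]].
have sub : UP P \subset \bigcup_(x in X) cut e [set x].
  apply/subsetP => f; rewrite inE => /andP[/bigcupP [S FS fS] fP].
  have fE := in_cut_edge fS.
  case/(cutP esym eirr): fS => a [b [hab Ef aS bS]].
  have aP : a \in P by apply: (subsetP fP); rewrite Ef set21.
  have bP : b \in P by apply: (subsetP fP); rewrite Ef set22.
  have : ~~ (Fp S && (mm <= #|P :&: S|) && (mm <= #|P :\: S|)).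
    by move/existsPn: hfin; apply.
  rewrite FS /= negb_and -!ltnNge => /orP[h|h].
    apply/bigcupP; exists a.
      rewrite inE aP /=; apply/existsP; exists S; by rewrite FS aS h.
    by apply: (edge_in_cut1 eirr) => //; rewrite Ef set21.
  apply/bigcupP; exists b.
    rewrite inE bP /=; apply/existsP; exists (~: S).
    by rewrite FpC FS inE bS /= -setDE h.
  by apply: (edge_in_cut1 eirr) => //; rewrite Ef set22.
apply: leq_trans (subset_leq_card sub) _.
apply: leq_trans (card_bigcup_le _ _) _.
apply: leq_trans (_ : _ <= \sum_(x in X) k * #|[set y | e x y && (y \notin P)]|) _.
  apply: leq_sum => x; rewrite inE => /andP[xP /existsP [A /andP[/andP[FA xA] hA]]].
  by rewrite (cut1 esym eirr); apply: peel_deg FA xA hA.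
rewrite -big_distrr /= leq_mul2l; apply/orP; right.
apply: sum_ell; apply/subsetP => x; rewrite inE => /andP[] //.
Qed.

Lemma Up_edge f : f \in Up -> f \in edges e.
Proof. by case/bigcupP => S _; apply: in_cut_edge. Qed.

Lemma split_U (P A : {set T}) :
  #|UP P| <= #|UP (P :&: A)| + #|UP (P :\: A)| + #|cut e A|.
Proof.
have sub : UP P \subset (UP (P :&: A) :|: UP (P :\: A)) :|: cut e A.
  apply/subsetP => f; rewrite inE => /andP[fU fP].
  case/edgesP: (Up_edge fU) => a [b [hab Ef]].
  have aP : a \in P by apply: (subsetP fP); rewrite Ef set21.
  have bP : b \in P by apply: (subsetP fP); rewrite Ef set22.
  rewrite !in_setU Ef (cut_pair eirr) // /UP !in_set -Ef fU /= Ef.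
  rewrite !subUset !sub1set !inE aP bP /= ?andbT.
  by case: (a \in A); case: (b \in A).
apply: leq_trans (subset_leq_card sub) _.
apply: leq_trans (leq_card_setU _ _) _; rewrite leq_add2r.
exact: leq_card_setU.
Qed.

Lemma split_cut (P A : {set T}) :
  #|cut e (P :&: A)| + #|cut e (P :\: A)| <= #|cut e P| + 2 * #|cut e A|.
Proof.
pose Q1 := [set f : {set T} | f :&: P \subset A].
pose Q2 := [set f : {set T} | f :&: P \subset ~: A].
have s1 : cut e (P :&: A) \subset (cut e P :&: Q1) :|: cut e A.
  apply/subsetP => f /(cutP esym eirr) [a [b [hab -> aS bS]]].
  move: aS bS; rewrite !in_setI negb_and => /andP[aP aA].
  rewrite in_setU in_setI !(cut_pair eirr) // aA aP.
  case bP: (b \in P) => /= bA; first by rewrite (negbTE bA).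
  apply/orP; left; rewrite /Q1 in_set.
  apply/subsetP => z; rewrite !inE => /andP[/orP[/eqP->|/eqP->] zP] //.
  by rewrite zP in bP.
have s2 : cut e (P :\: A) \subset (cut e P :&: Q2) :|: cut e A.
  apply/subsetP => f /(cutP esym eirr) [a [b [hab -> aS bS]]].
  move: aS bS; rewrite !in_setD negb_and negbK => /andP[aA aP].
  rewrite in_setU in_setI !(cut_pair eirr) // (negbTE aA) aP.
  case bP: (b \in P) => /=; rewrite ?orbF => bA; first by rewrite bA.
  apply/orP; left; rewrite /Q2 in_set.
  apply/subsetP => z; rewrite !inE => /andP[/orP[/eqP->|/eqP->] zP] //.
  by rewrite zP in bP.
have s3 : cut e P :&: Q2 \subset cut e P :\: Q1.
  apply/subsetP => f; rewrite !in_setI in_setD => /andP[fP h2]; rewrite fP andbT.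
  apply/negP => h1.
  have : #|f :&: P| == 1 by move: fP; rewrite inE => /andP[].
  move=> /eqP h; have : 0 < #|f :&: P| by rewrite h.
  case/card_gt0P => z zfP.
  move: h1 h2; rewrite /Q1 /Q2 !in_set => /subsetP h1 /subsetP h2.
  by have := h1 z zfP; have := h2 z zfP; rewrite inE => /negP.
have c1 := subset_leq_card s1; have c2 := subset_leq_card s2.
have c3 := subset_leq_card s3.
have u1 := (leq_card_setU (cut e P :&: Q1) (cut e A)).1.
have u2 := (leq_card_setU (cut e P :&: Q2) (cut e A)).1.
have i3 := cardsID Q1 (cut e P).
have := leq_add (leq_trans c1 u1) (leq_trans c2 u2).
move: c3 i3; clear.
set x1 := #|cut e P :&: Q1|; set x2 := #|cut e P :\: Q1|; set x3 := #|cut e P :&: Q2|.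
set x4 := #|cut e A|; set x5 := #|cut e P|.
lia.
Qed.


Lemma main_ind n (P : {set T}) : #|P| <= n ->
  mm * #|UP P| <= mm * k * #|cut e P| + (2 * k + 1) * (2 * d) * (#|P| - mm).
Proof.
elim: n P => [|n IH] P hP.
  have -> : P = set0 by apply/eqP; rewrite -cards_eq0; lia.
  have -> : UP set0 = set0.
    apply/setP => f; rewrite /UP !inE; apply/negP => /andP[/Up_edge fE].
    case/edgesP: fE => a [b [_ ->]]; rewrite subUset sub1set inE //.
  by rewrite cards0 muln0.
case: (boolP [exists A, Fp A && (mm <= #|P :&: A|) && (mm <= #|P :\: A|)]).
  case/existsP => A /andP[/andP[FA h1] h2].
  have hs := cardsID A P.
  have hm1 := mm_ge1.
  have IH1 := IH (P :&: A) ltac:(lia).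
  have IH2 := IH (P :\: A) ltac:(lia).
  have hU := split_U P A.
  have hC := split_cut P A.
  have hW := Fp_cut FA.
  move: IH1 IH2 hU hC hW hs h1 h2 hm1; clear.
  set u := #|UP P|; set u1 := #|UP (P :&: A)|; set u2 := #|UP (P :\: A)|.
  set w := #|cut e A|; set cp := #|cut e P|; set c1 := #|cut e (P :&: A)|.
  set c2 := #|cut e (P :\: A)|; set p := #|P|; set p1 := #|P :&: A|; set p2 := #|P :\: A|.
  set m := mm.
  move=> IH1 IH2 hU hC hW hs h1 h2 hm1.
  have e1 : m * u <= m * u1 + m * u2 + m * w by rewrite -!mulnDr leq_mul2l hU orbT.
  have e2 : m * k * (c1 + c2) <= m * k * cp + m * k * (2 * w) by rewrite -mulnDr leq_mul2l hC orbT.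
  have e3 : m * w * (2 * k + 1) <= m * (2 * d) * (2 * k + 1) by rewrite leq_mul2r leq_mul2l hW !orbT.
  have e4 : (2 * k + 1) * (2 * d) * (p1 - m) + (2 * k + 1) * (2 * d) * (p2 - m) + (2 * k + 1) * (2 * d) * m
            = (2 * k + 1) * (2 * d) * (p - m).
    rewrite -!mulnDr; congr (_ * _); lia.
  nia.
move=> hfin; have := final_case hfin.
set u := #|UP P|; set cp := #|cut e P|; move=> h.
have : mm * u <= mm * (k * cp) by rewrite leq_mul2l h orbT.
rewrite mulnA; move=> h'; apply: leq_trans h' _; exact: leq_addr.
Qed.

Lemma Up_bound : #|Up| <= 4 * k * (2 * k + 1) * #|T|.
Proof.
have := @main_ind #|[set: T]| [set: T] (leqnn _).
have -> : UP [set: T] = Up by apply/setP => f; rewrite /UP inE subsetT andbT.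
have -> : cut e [set: T] = set0.
  apply/setP => f; rewrite in_set0; apply/negP => /(cutP esym eirr) [a [b [_ _ _]]].
  by rewrite inE.
rewrite cards0 muln0 add0n cardsT.
have hm1 := mm_ge1; have hmg := mm_ge.
move: hm1 hmg; set m := mm; set u := #|Up|; set n := #|T|; move=> hm1 hmg h.
have h2 : (2 * k + 1) * (2 * d) * (n - m) <= m * (4 * k * (2 * k + 1) * n).
  apply: leq_trans (_ : _ <= (2 * k + 1) * (2 * d) * n) _; first by rewrite leq_mul2l leq_subr orbT.
  nia.
rewrite -(leq_pmul2l hm1); exact: leq_trans h h2.
Qed.

End Main.

Unset Implicit Arguments.
Local Open Scope ring_scope.

Theorem mainTheorem7 (R : realType) (eps : R) :
  0 < eps < 1 ->
  exists K : R, forall (T : finType) (e : rel T) (c d : nat),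
    simple_graph e -> is_min_degree e d -> is_min_cut_value e c ->
    (#|\bigcup_(S : {set T} | nonsingleton S &&
                  ((#|cut e S|)%:R <= c%:R + eps * d%:R)) cut e S|)%:R
      <= K * (#|T|)%:R.
Proof.
case/andP => e0 e1.
have g0 : 0 < 1 - eps by rewrite subr_gt0.
have b0 : 0 <= 4 / (1 - eps) by rewrite divr_ge0 // ltW.
set k := (Num.Def.archi_bound (4 / (1 - eps))).+2.
have hk : (2 <= k)%N by [].
have hkR : 4 <= k%:R * (1 - eps).
  have h := archi_boundP b0.
  have : 4 / (1 - eps) <= k%:R.
    apply: le_trans (ltW h) _; rewrite ler_nat /k; exact: leq_trans (leqnSn _) (leqnSn _).
  by rewrite ler_pdivrMr.
exists (4 * k * (2 * k + 1))%N%:R.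
move=> T e c d [esym eirr] [[x0 hx0] hdeg] [[S0 [cs0 _]] hcut].
have cs1 : is_cut_side [set x0].
  apply/andP; split; first by apply/set0Pn; exists x0; rewrite inE.
  apply/eqP => E; case/andP: cs0 => /set0Pn [y yS] nT.
  apply: (negP nT); apply/eqP/setP => z; rewrite inE.
  have : z \in [set x0] by rewrite E inE.
  have : y \in [set x0] by rewrite E inE.
  by rewrite !inE => /eqP Ey /eqP Ez; rewrite Ez -Ey.
have hcd : (c <= d)%N by rewrite -hx0 -(cut1 esym eirr); exact: hcut.
have hsub : \bigcup_(S : {set T} | nonsingleton S &&
                  ((#|cut e S|)%:R <= c%:R + eps * d%:R)) cut e S \subset Up e c d k.
  apply/subsetP => f /bigcupP [S /andP[ns hr] fS]; apply/bigcupP; exists S => //.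
  rewrite /Fp ns /= -(ler_nat R) natrD !natrM natrD.
  have h1 : k%:R * (#|cut e S|)%:R <= k%:R * (c%:R + eps * d%:R) :> R.
    by rewrite ler_wpM2l.
  have h2 : 4 * (d%:R : R) <= k%:R * (1 - eps) * d%:R.
    by rewrite ler_wpM2r.
  lra.
have hb := Up_bound esym eirr hdeg hcut hcd hk.
rewrite -natrM ler_nat; apply: leq_trans (subset_leq_card hsub) hb.
Qed.
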